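(* Let $X=[0,\infty)\subset\mathbb{R}$ and $\mathcal{A}=\{\alpha_1,\dots,\alpha_m\}\subset\mathbb{R}$ with $\alpha_1<\cdots<\alpha_m$; identify $\mathbb{R}^{\mathcal{A}}$ with $\mathbb{R}^m$ (index $i$ for $\alpha_i$), with standard basis $\delta_1,\dots,\delta_m$. Then the normalized $X$-circuits of $\mathcal{A}$ are exactly the vectors of the following two types: (1) $\lambda=\delta_k-\delta_j$ with $1\le j<k\le m$; (2) for $1\le i<j<k\le m$, \[\lambda=\frac{\alpha_j-\alpha_i}{\alpha_k-\alpha_i}\,\delta_k+\frac{\alpha_k-\alpha_j}{\alpha_k-\alpha_i}\,\delta_i-\delta_j.\]
   Context: For a nonempty closed convex $X\subset\mathbb{R}^n$ and nonempty finite $\mathcal{A}\subset\mathbb{R}^n$: $\mathcal{A}\nu=\sum_\alpha\alpha\nu_\alpha$ for $\nu\in\mathbb{R}^{\mathcal{A}}$; $\sigma_X(y)=\sup\{y^Tx:x\in X\}\in\mathbb{R}\cup\{+\infty\}$; for $\beta\in\mathcal{A}$, $N_\beta=\{\nu\in\mathbb{R}^{\mathcal{A}}:\nu_\alpha\ge0\ \forall\alpha\neq\beta,\ \sum_\alpha\nu_\alpha=0\}$. A vector $\nu^\star\in N_\beta$ is an $X$-circuit of $\mathcal{A}$ if (1) $\nu^\star\neq0$, (2) $\sigma_X(-\mathcal{A}\nu^\star)<\infty$, and (3) $\nu^\star$ cannot be written as a convex combination of two non-proportional vectors $\nu^{(1)},\nu^{(2)}\in N_\beta$ such that the map $\nu\mapsto\sigma_X(-\mathcal{A}\nu)$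 is affine on the segment $[\nu^{(1)},\nu^{(2)}]$. An $X$-circuit is normalized if its unique negative entry equals $-1$. *)

(* Defs.v *)
From HB Require Import structures.
From mathcomp Require Import all_boot all_order all_algebra.
From mathcomp Require Import all_classical all_reals ereal.
Set Implicit Arguments. Unset Strict Implicit. Unset Printing Implicit Defensive.
Import Order.TTheory GRing.Theory Num.Theory.
Local Open Scope ring_scope.
Local Open Scope classical_set_scope.

(* Setting n = 1: X is a subset of R, the support A = {alpha_1,...,alpha_m}
   is given by alpha : 'I_m -> R, and R^A is identified with 'I_m -> R. *)

Section XCircuits.
Variables (R : realType) (m : nat).

Definition Amul (alpha : 'I_m -> R) (nu : 'I_m -> R) : R :=
  \sum_(i < m) alpha i * nu i.

Definition support_fun (X : set R) (y : R) : \bar R :=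
  ereal_sup [set (y * x)%:E | x in X].

Definition Ncone (beta : 'I_m) : set ('I_m -> R) :=
  [set nu | (forall i, i != beta -> 0 <= nu i) /\ \sum_(i < m) nu i = 0].

Definition proportional (nu1 nu2 : 'I_m -> R) : Prop :=
  exists c : R, (forall i, nu1 i = c * nu2 i) \/ (forall i, nu2 i = c * nu1 i).

Definition affine_on_segment (f : ('I_m -> R) -> \bar R) (nu1 nu2 : 'I_m -> R) :
  Prop :=
  exists a b : R, forall t : R, 0 <= t <= 1 ->
    f (fun i => (1 - t) * nu1 i + t * nu2 i) = (a + b * t)%:E.

Definition is_X_circuit (X : set R) (alpha : 'I_m -> R) (beta : 'I_m)
    (nu : 'I_m -> R) : Prop :=
  [/\ Ncone beta nu,
      nu <> (fun _ => 0),
      (support_fun X (- Amul alpha nu) < +oo)%E &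
      ~ (exists (nu1 nu2 : 'I_m -> R) (t : R),
           [/\ Ncone beta nu1 /\ Ncone beta nu2, 0 < t < 1,
               (forall i, nu i = t * nu1 i + (1 - t) * nu2 i),
               (~ proportional nu1 nu2) &
               affine_on_segment (fun v => support_fun X (- Amul alpha v))
                 nu1 nu2])].

Definition normalized (nu : 'I_m -> R) : Prop :=
  exists j, nu j = -1 /\ forall i, i != j -> 0 <= nu i.

End XCircuits.

(* Main.v *)
Require Import Defs.
From HB Require Import structures.
From mathcomp Require Import all_boot all_order all_algebra.
From mathcomp Require Import all_classical all_reals ereal.
From mathcomp Require Import ring lra.
Import Order.TTheory GRing.Theory Num.Theory.
Local Open Scope ring_scope.
Local Open Scope classical_set_scope.

Section Sums.
Variables (R : realType) (m : nat).
Implicit Types (f g : 'I_m -> R).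

Lemma sum_delta (k : 'I_m) f : \sum_(l < m) f l * (l == k)%:R = f k.
Proof.
rewrite (bigD1 k) //= eqxx mulr1 big1 ?addr0 // => l /negbTE ->.
by rewrite mulr0.
Qed.

Lemma sum_delta1 (k : 'I_m) : \sum_(l < m) (l == k)%:R = 1 :> R.
Proof.
transitivity (\sum_(l < m) (fun _ => 1 : R) l * (l == k)%:R).
  by apply: eq_bigr => l _; rewrite mul1r.
exact: sum_delta.
Qed.

Lemma sum2 f (i j : 'I_m) : i != j ->
  (forall l, l != i -> l != j -> f l = 0) -> \sum_(l < m) f l = f i + f j.
Proof.
move=> hij h; rewrite (bigD1 i) //= (bigD1 j) /=; last by rewrite eq_sym.
rewrite big1 ?addr0 ?addrA // => l /andP [hl1 hl2]; exact: h.
Qed.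

Lemma sum3 f (i j k : 'I_m) : i != j -> j != k -> i != k ->
  (forall l, l != i -> l != j -> l != k -> f l = 0) ->
  \sum_(l < m) f l = f i + f j + f k.
Proof.
move=> hij hjk hik h; rewrite (bigD1 i) //= (bigD1 j) /=; last by rewrite eq_sym.
rewrite (bigD1 k) /=; last by rewrite eq_sym (eq_sym k) hik.
rewrite big1 ?addr0 ?addrA // => l /andP [/andP [hl1 hl2] hl3]; exact: h.
Qed.

Variable alpha : 'I_m -> R.

Lemma AmulC f g a b : Amul alpha (fun i => a * f i + b * g i) =
  a * Amul alpha f + b * Amul alpha g.
Proof.
rewrite /Amul !mulr_sumr -big_split /=; apply: eq_bigr => i _; ring.
Qed.

Lemma AmulD f g : Amul alpha (fun i => f i + g i) = Amul alpha f + Amul alpha g.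
Proof.
have := AmulC f g 1 1; rewrite !mul1r => <-; rewrite /Amul.
by apply: eq_bigr => i _; rewrite !mul1r.
Qed.

Lemma AmulB f g : Amul alpha (fun i => f i - g i) = Amul alpha f - Amul alpha g.
Proof.
have := AmulC f g 1 (-1); rewrite mul1r mulN1r => <-; rewrite /Amul.
by apply: eq_bigr => i _; rewrite mul1r mulN1r.
Qed.


Lemma supp0 (y : R) : y <= 0 -> support_fun [set x : R | 0 <= x] y = 0%E.
Proof.
move=> hy; apply/eqP; rewrite eq_le; apply/andP; split.
  apply: ge_ereal_sup => _ [x /= hx <-]; rewrite lee_fin.
  by rewrite mulr_le0_ge0.
apply: ereal_sup_ubound; exists 0%R => //=; by rewrite mulr0.
Qed.

Lemma supp_fin (y : R) :
  (support_fun [set x : R | (0 <= x)%R] y < +oo)%E -> y <= 0.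
Proof.
move=> hlt; rewrite leNgt; apply/negP => hy.
have h0 : (0 <= support_fun [set x : R | (0 <= x)%R] y)%E.
  apply: ereal_sup_ubound; exists 0%R => //=; by rewrite mulr0.
move: h0 hlt; case E: (support_fun _ y) => [s| |] //= hs _.
have : ((y * ((s + 1) / y))%:E <= support_fun [set x : R | (0 <= x)%R] y)%E.
  apply: ereal_sup_ubound; exists ((s + 1) / y) => //=.
  rewrite lee_fin in hs. apply: divr_ge0; lra.
rewrite E lee_fin mulrC divfK ?gt_eqF //; lra.
Qed.

Local Notation X0 := [set x : R | (0 <= x)%R].
Local Notation F := (fun v => support_fun X0 (- Amul alpha v)).

Lemma F0 v : 0 <= Amul alpha v -> F v = 0%E.
Proof. move=> h; apply: supp0; rewrite oppr_le0 //. Qed.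

Lemma Ffin v : (F v < +oo)%E -> 0 <= Amul alpha v.
Proof. by move/supp_fin; rewrite oppr_le0. Qed.

Lemma affine_ends v1 v2 : affine_on_segment F v1 v2 ->
  0 <= Amul alpha v1 /\ 0 <= Amul alpha v2.
Proof.
move=> [a [b h]]; split.
  have := h 0; rewrite lexx ler01 => /(_ isT).
  have -> : (fun i => (1 - 0) * v1 i + 0 * v2 i) = v1.
    by apply/funext => i; rewrite subr0 mul1r mul0r addr0.
  by move=> e; apply: Ffin; rewrite e ltry.
have := h 1; rewrite lexx ler01 => /(_ isT).
have -> : (fun i => (1 - 1) * v1 i + 1 * v2 i) = v2.
  by apply/funext => i; rewrite subrr mul1r mul0r add0r.
by move=> e; apply: Ffin; rewrite e ltry.
Qed.

Lemma affine_of v1 v2 : 0 <= Amul alpha v1 -> 0 <= Amul alpha v2 ->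
  affine_on_segment F v1 v2.
Proof.
move=> h1 h2; exists 0, 0 => t /andP [t0 t1].
rewrite F0 ?mul0r ?addr0 // AmulC.
have : 0 <= 1 - t by lra.
move=> h; apply: addr_ge0; exact: mulr_ge0.
Qed.

Lemma perturb beta lam w (l0 : 'I_m) :
  is_X_circuit X0 alpha beta lam -> lam beta = -1 -> w beta = 0 ->
  w l0 != 0 -> \sum_(i < m) w i = 0 ->
  (forall i, i != beta -> 0 <= lam i + w i /\ 0 <= lam i - w i) ->
  0 <= Amul alpha (fun i => lam i + w i) ->
  0 <= Amul alpha (fun i => lam i - w i) -> False.
Proof.
move=> [[_ hs] _ _ hnot] hb wb wl0 sw hpos h1 h2; apply: hnot.
exists (fun i => lam i + w i), (fun i => lam i - w i), (1/2).
split.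
- split; split.
  + by move=> i /hpos [].
  + by rewrite big_split /= hs sw addr0.
  + by move=> i /hpos [].
  + by rewrite sumrB hs sw subr0.
- apply/andP; split; lra.
- move=> i; lra.
- move=> [c [hc|hc]].
  + have := hc beta; rewrite hb wb addr0 subr0 => hc1.
    have c1 : c = 1 by move: hc1; rewrite mulrN1 => /oppr_inj.
    move: (hc l0); rewrite c1 mul1r => e.
    by move/eqP: wl0; apply; lra.
  + have := hc beta; rewrite hb wb addr0 subr0 => hc1.
    have c1 : c = 1 by move: hc1; rewrite mulrN1 => /oppr_inj.
    move: (hc l0); rewrite c1 mul1r => e.
    by move/eqP: wl0; apply; lra.
- exact: affine_of.
Qed.


Lemma zero_split (t x y : R) : 0 < t -> t < 1 -> 0 <= x -> 0 <= y ->
  t * x + (1 - t) * y = 0 -> x = 0 /\ y = 0.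
Proof.
move=> t0 t1 x0 y0 e.
have h1 : 0 <= t * x by exact: mulr_ge0 (ltW t0) x0.
have h2 : 0 <= (1 - t) * y by apply: mulr_ge0 => //; lra.
have ex : t * x = 0 by lra.
have ey : (1 - t) * y = 0 by lra.
split.
  by move/eqP: ex; rewrite mulf_eq0 gt_eqF //= => /eqP.
by move/eqP: ey; rewrite mulf_eq0 subr_eq0 gt_eqF //= => /eqP.
Qed.

Lemma proportional_of (lam v1 v2 : 'I_m -> R) a b :
  (forall l, v1 l = a * lam l) -> (forall l, v2 l = b * lam l) ->
  proportional v1 v2.
Proof.
move=> h1 h2; have [b0|b0] := eqVneq b 0.
  by exists 0; right => l; rewrite h2 b0 !mul0r.
exists (a / b); left => l; rewrite h1 h2 mulrA divfK //.
Qed.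

Hypothesis halpha : forall i j : 'I_m, (i < j)%N -> alpha i < alpha j.

Lemma circ1 (j k : 'I_m) lam : (j < k)%N ->
  (forall l, lam l = (l == k)%:R - (l == j)%:R) ->
  is_X_circuit X0 alpha j lam.
Proof.
move=> jk hl.
have kj : k != j by rewrite neq_ltn jk orbT.
have Alam : Amul alpha lam = alpha k - alpha j.
  rewrite /Amul (eq_bigr (fun l => alpha l * (l == k)%:R - alpha l * (l == j)%:R)).
    by rewrite sumrB !sum_delta.
  by move=> l _; rewrite hl mulrBr.
have A0 : 0 <= Amul alpha lam by rewrite Alam subr_ge0 ltW // halpha.
split.
- split; first by move=> i /negbTE ij; rewrite hl ij subr0 ler0n.
  by rewrite (eq_bigr _ (fun l _ => hl l)) sumrB !sum_delta1 subrr.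
- move/(congr1 (fun f => f k)); rewrite hl eqxx (negbTE kj) subr0 => /eqP.
  by rewrite oner_eq0.
- by have /= -> := F0 _ A0; rewrite ltry.
move=> [v1 [v2 [t [[N1 N2] /andP [t0 t1] hc hnp haff]]]]; apply: hnp.
have z : forall l, l != j -> l != k -> v1 l = 0 /\ v2 l = 0.
  move=> l lj lk; apply: (@zero_split t (v1 l) (v2 l) t0 t1).
  - by case: N1 => + _; apply.
  - by case: N2 => + _; apply.
  by rewrite -hc hl (negbTE lj) (negbTE lk) subrr.
have key : forall v, Ncone j v -> (forall l, l != j -> l != k -> v l = 0) ->
    forall l, v l = v k * lam l.
  move=> v [_ sv] zv.
  have e : v j + v k = 0 by rewrite -sv (@sum2 v j k) // eq_sym.
  move=> l; rewrite hl; have [->|lk] := eqVneq l k.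
    by rewrite (negbTE kj) subr0 mulr1.
  have [->|lj] := eqVneq l j; first by rewrite sub0r mulrN1; lra.
  by rewrite subrr mulr0 zv.
have k1 : forall l, v1 l = v1 k * lam l.
  by apply: key => // l lj lk; case: (z l lj lk).
have k2 : forall l, v2 l = v2 k * lam l.
  by apply: key => // l lj lk; case: (z l lj lk).
exact: (@proportional_of lam v1 v2 _ _ k1 k2).
Qed.


Lemma lt_neq (i j : 'I_m) : (i < j)%N -> i != j.
Proof. by move=> h; rewrite neq_ltn h. Qed.

Lemma circ2 (i j k : 'I_m) lam : (i < j)%N -> (j < k)%N ->
  (forall l, lam l =
        (alpha j - alpha i) / (alpha k - alpha i) * (l == k)%:R
        + (alpha k - alpha j) / (alpha k - alpha i) * (l == i)%:R
        - (l == j)%:R) ->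
  is_X_circuit X0 alpha j lam.
Proof.
move=> hij hjk hl.
have hik : (i < k)%N by exact: ltn_trans hij hjk.
have ij := lt_neq _ _ hij; have jk := lt_neq _ _ hjk; have ik := lt_neq _ _ hik.
have ji : j != i by rewrite eq_sym. have kj : k != j by rewrite eq_sym.
have ki : k != i by rewrite eq_sym.
have aij := halpha _ _ hij; have ajk := halpha _ _ hjk; have aik := halpha _ _ hik.
set d := alpha k - alpha i.
have d0 : 0 < d by rewrite /d subr_gt0.
have dne : d != 0 by rewrite gt_eqF.
set a := (alpha j - alpha i) / d.
set b := (alpha k - alpha j) / d.
have a0 : 0 < a by rewrite /a divr_gt0 // subr_gt0.
have b0 : 0 < b by rewrite /b divr_gt0 // subr_gt0.
have li : lam i = b by rewrite hl eqxx (negbTE ik) (negbTE ij) /= mulr0 mulr1 subr0 add0r.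
have lj : lam j = -1 by rewrite hl eqxx (negbTE jk) (negbTE ji) /= !mulr0 add0r sub0r.
have lk : lam k = a by rewrite hl eqxx (negbTE ki) (negbTE kj) /= !mulr0 mulr1 subr0 addr0.
have lz : forall l, l != i -> l != j -> l != k -> lam l = 0.
  by move=> l li' lj' lk'; rewrite hl (negbTE li') (negbTE lj') (negbTE lk') /= !mulr0 subr0 addr0.
have ab : a + b = 1.
  rewrite /a /b -mulrDl.
  have -> : alpha j - alpha i + (alpha k - alpha j) = d by rewrite /d; ring.
  exact: divff.
have Alam : Amul alpha lam = 0.
  rewrite /Amul (@sum3 (fun l => alpha l * lam l) i j k) //; last first.
    by move=> l h1 h2 h3; rewrite lz ?mulr0.
  rewrite li lj lk /b /a /d; field; exact: dne.
have A0 : 0 <= Amul alpha lam by rewrite Alam.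
split.
- split; first by move=> l lj'; rewrite hl (negbTE lj') subr0;
    apply: addr_ge0; apply: mulr_ge0; rewrite ?ler0n ?ltW.
  rewrite (@sum3 lam i j k) // li lj lk; lra.
- move/(congr1 (fun f => f j)); rewrite lj => /eqP.
  by rewrite oppr_eq0 oner_eq0.
- by have /= -> := F0 _ A0; rewrite ltry.
move=> [v1 [v2 [t [[N1 N2] /andP [t0 t1] hc hnp haff]]]]; apply: hnp.
have [A1 A2] := affine_ends _ _ haff.
have Asplit : t * Amul alpha v1 + (1 - t) * Amul alpha v2 = 0.
  rewrite -AmulC -Alam; congr Amul; apply/funext => l; by rewrite hc.
have [A1' A2'] := zero_split _ _ _ t0 t1 A1 A2 Asplit.
have z : forall l, l != i -> l != j -> l != k -> v1 l = 0 /\ v2 l = 0.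
  move=> l li' lj' lk'; apply: (@zero_split t (v1 l) (v2 l) t0 t1).
  - by case: N1 => + _; apply.
  - by case: N2 => + _; apply.
  by rewrite -hc lz.
have key : forall v, Ncone j v -> (forall l, l != i -> l != j -> l != k -> v l = 0) ->
    Amul alpha v = 0 -> forall l, v l = (- v j) * lam l.
  move=> v [_ sv] zv Av.
  have e1 : v i + v j + v k = 0 by rewrite -sv (@sum3 v i j k).
  have e2 : alpha i * v i + alpha j * v j + alpha k * v k = 0.
    rewrite -Av /Amul (@sum3 (fun l => alpha l * v l) i j k) //.
    by move=> l h1 h2 h3; rewrite zv ?mulr0.
  have ei : v i = - v j - v k by lra.
  rewrite ei in e2.
  have h : v k * d = - v j * (alpha j - alpha i).
    have : v k * d + v j * (alpha j - alpha i) =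
       alpha i * (- v j - v k) + alpha j * v j + alpha k * v k by rewrite /d; ring.
    rewrite e2; lra.
  have h' : v i * d = - v j * (alpha k - alpha j).
    have : v i * d + v j * (alpha k - alpha j) = - (v k * d + v j * (alpha j - alpha i)).
      by rewrite ei /d; ring.
    rewrite h; lra.
  move=> l.
  have [->|l_i] := eqVneq l i.
    by rewrite li /b mulrA -h' mulfK.
  have [->|l_j] := eqVneq l j.
    by rewrite lj mulrN1 opprK.
  have [->|l_k] := eqVneq l k.
    by rewrite lk /a mulrA -h mulfK.
  by rewrite lz ?mulr0 // zv.
have k1 : forall l, v1 l = (- v1 j) * lam l.
  by apply: key => // l h1 h2 h3; case: (z l h1 h2 h3).
have k2 : forall l, v2 l = (- v2 j) * lam l.
  by apply: key => // l h1 h2 h3; case: (z l h1 h2 h3).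
exact: (@proportional_of lam v1 v2 _ _ k1 k2).
Qed.


Lemma bound (x c e : R) : 0 <= e -> e * `|c| <= x -> 0 <= x + e * c /\ 0 <= x - e * c.
Proof.
move=> e0 h; have h1 := ler_norm c; have h2 := ler_norm (- c); rewrite normrN in h2.
have h3 : e * c <= e * `|c| by apply: ler_wpM2l.
have h4 : e * (- c) <= e * `|c| by apply: ler_wpM2l.
rewrite mulrN in h4; split; lra.
Qed.

Lemma AmulDZ f g e : Amul alpha (fun i => f i + e * g i) = Amul alpha f + e * Amul alpha g.
Proof. rewrite /Amul mulr_sumr -big_split /=; apply: eq_bigr => i _; ring. Qed.

Lemma AmulBZ f g e : Amul alpha (fun i => f i - e * g i) = Amul alpha f - e * Amul alpha g.
Proof. rewrite /Amul mulr_sumr -sumrB /=; apply: eq_bigr => i _; ring. Qed.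

Lemma perturb_eps beta lam v (l0 : 'I_m) e :
  is_X_circuit X0 alpha beta lam -> lam beta = -1 -> v beta = 0 ->
  v l0 != 0 -> \sum_(i < m) v i = 0 -> 0 < e ->
  (forall i, i != beta -> e * `|v i| <= lam i) ->
  e * `|Amul alpha v| <= Amul alpha lam -> False.
Proof.
move=> C hb vb vl0 sv e0 hi hA.
apply: (@perturb beta lam (fun i => e * v i) l0 C hb).
- by rewrite vb mulr0.
- by rewrite mulf_neq0 // gt_eqF.
- by rewrite -mulr_sumr sv mulr0.
- by move=> i /hi; apply: bound; rewrite ltW.
- by rewrite AmulDZ; case: (bound _ _ _ (ltW e0) hA).
- by rewrite AmulBZ; case: (bound _ _ _ (ltW e0) hA).
Qed.


Lemma alpha_inj (i j : 'I_m) : i != j -> alpha i != alpha j.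
Proof.
move=> ij; case: (ltngtP i j) => h.
- by rewrite lt_eqF // halpha.
- by rewrite gt_eqF // halpha.
- by move/eqP: ij; case; apply: val_inj.
Qed.

Lemma type2_of beta lam (p q : 'I_m) : (p < q)%N ->
  p != beta -> q != beta -> 0 < lam p -> 0 < lam q -> lam beta = -1 ->
  lam p + lam q = 1 -> alpha p * lam p + alpha q * lam q = alpha beta ->
  (forall l, l != beta -> l != p -> l != q -> lam l = 0) ->
  exists i j k : 'I_m, (i < j)%N /\ (j < k)%N /\
      forall l, lam l =
        (alpha j - alpha i) / (alpha k - alpha i) * (l == k)%:R
        + (alpha k - alpha j) / (alpha k - alpha i) * (l == i)%:R
        - (l == j)%:R.
Proof.
move=> pq pb qb lp lq hb s1 s2 z.
have apq := halpha _ _ pq.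
have pb' : (p < beta)%N.
  case: (ltngtP p beta) => h //.
    have := halpha _ _ h => hh; exfalso; nra.
  by move/eqP: pb; case; apply: val_inj.
have bq : (beta < q)%N.
  case: (ltngtP beta q) => h //.
    have := halpha _ _ h => hh; exfalso; nra.
  by move/eqP: qb; case; apply: val_inj.
exists p, beta, q; split => //; split => //.
have dne : alpha q - alpha p != 0 by rewrite subr_eq0 eq_sym lt_eqF.
have hq : lam q * (alpha q - alpha p) = alpha beta - alpha p.
  have e : lam p = 1 - lam q by lra.
  rewrite e in s2; nra.
have hp : lam p * (alpha q - alpha p) = alpha q - alpha beta.
  have e : lam p = 1 - lam q by lra.
  rewrite e; nra.
have qp : q != p by rewrite eq_sym lt_eqF.
move=> l; have [->|lq'] := eqVneq l q.
  by rewrite (negbTE qp) (negbTE qb) /= mulr0 mulr1 subr0 addr0 -hq mulfK.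
have [->|lp'] := eqVneq l p.
  by rewrite (negbTE pb) /= mulr0 mulr1 subr0 add0r -hp mulfK.
have [->|lb'] := eqVneq l beta.
  by rewrite hb /= !mulr0 add0r sub0r.
by rewrite z //= !mulr0 addr0 subr0.
Qed.


Lemma forward beta lam :
  is_X_circuit X0 alpha beta lam -> normalized lam ->
  ((exists j k : 'I_m, (j < k)%N /\
      forall l, lam l = (l == k)%:R - (l == j)%:R)
   \/
   (exists i j k : 'I_m, (i < j)%N /\ (j < k)%N /\
      forall l, lam l =
        (alpha j - alpha i) / (alpha k - alpha i) * (l == k)%:R
        + (alpha k - alpha j) / (alpha k - alpha i) * (l == i)%:R
        - (l == j)%:R)).
Proof.
move=> C [j0 [hj0 hpos]].
case: (C) => [[Nn hs] hne hfin _].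
have jb : j0 = beta.
  case: (eqVneq j0 beta) => // h; have := Nn _ h; rewrite hj0 => h'.
  by exfalso; move: h'; rewrite oppr_ge0 ler10.
subst j0; rename hj0 into hb.
have A0 : 0 <= Amul alpha lam := Ffin _ hfin.
have nz : forall l, l != beta -> ~~ (0 < lam l) -> lam l = 0.
  move=> l lb; rewrite -leNgt => h; apply/eqP; rewrite eq_le h Nn //.
case: (pickP (fun p => (p != beta) && (0 < lam p))) => [p /andP [pb pp] | np]; last first.
  exfalso; move: hs; rewrite (bigD1 beta) //= big1 ?addr0 ?hb.
    by move/eqP; rewrite oppr_eq0 oner_eq0.
  by move=> i ib; apply: nz => //; have := np i; rewrite /= ib /= => ->.
have bp : beta != p by rewrite eq_sym.
case: (pickP (fun q => [&& q != beta, q != p & 0 < lam q])) => [q /and3P [qb qp qq] | nq]; last first.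
  have z : forall l, l != beta -> l != p -> lam l = 0.
    by move=> l lb lp; apply: nz => //; have := nq l; rewrite /= lb lp /= => ->.
  have s2 : lam beta + lam p = 0 by rewrite -hs (@sum2 lam beta p).
  have lp1 : lam p = 1 by rewrite hb in s2; lra.
  have Ae : Amul alpha lam = alpha p - alpha beta.
    rewrite /Amul (@sum2 (fun l => alpha l * lam l) beta p) //=.
      by rewrite hb lp1; ring.
    by move=> l h1 h2; rewrite z ?mulr0.
  left; exists beta, p; split.
    case: (ltngtP beta p) => h //.
      have := halpha _ _ h => hh; exfalso; rewrite Ae in A0; lra.
    by move/eqP: bp; case; apply: val_inj.
  move=> l; have [->|lp'] := eqVneq l p.
    by rewrite (negbTE pb) lp1 subr0.
  have [->|lb'] := eqVneq l beta; first by rewrite hb sub0r.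
  by rewrite z // subr0.
have pq : p != q by rewrite eq_sym.
have bq : beta != q by rewrite eq_sym.
case: (pickP (fun r => [&& r != beta, r != p, r != q & 0 < lam r])) => [r /and4P [rb rp rq rr] | nr].
  exfalso.
  have pr : p != r by rewrite eq_sym.
  have qr : q != r by rewrite eq_sym.
  pose cp := alpha q - alpha r; pose cq := alpha r - alpha p; pose cr := alpha p - alpha q.
  pose v := fun l : 'I_m => cp * (l == p)%:R + cq * (l == q)%:R + cr * (l == r)%:R.
  have vp : v p = cp by rewrite /v eqxx (negbTE pq) (negbTE pr) /= !mulr0 mulr1 !addr0.
  have vq : v q = cq by rewrite /v eqxx (negbTE qp) (negbTE qr) /= !mulr0 mulr1 addr0 add0r.
  have vr : v r = cr by rewrite /v eqxx (negbTE rp) (negbTE rq) /= !mulr0 mulr1 !add0r.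
  have vz : forall l, l != p -> l != q -> l != r -> v l = 0.
    by move=> l h1 h2 h3; rewrite /v (negbTE h1) (negbTE h2) (negbTE h3) /= !mulr0 !addr0.
  pose mu := Num.min (Num.min (lam p) (lam q)) (lam r).
  pose M := `|cp| + `|cq| + `|cr| + 1.
  have M0 : 0 < M by rewrite /M; have := normr_ge0 cp; have := normr_ge0 cq;
    have := normr_ge0 cr; lra.
  have mu0 : 0 < mu by rewrite /mu !lt_min pp qq rr.
  pose e := mu / M.
  have e0 : 0 < e by rewrite /e divr_gt0.
  have key : forall c x : R, `|c| <= M -> mu <= x -> e * `|c| <= x.
    move=> c x hc hx.
    have : e * `|c| <= e * M by apply: ler_wpM2l => //; rewrite ltW.
    rewrite /e divfK ?gt_eqF // => h; exact: (le_trans h hx).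
  have hcp : `|cp| <= M by rewrite /M; have := normr_ge0 cq; have := normr_ge0 cr; lra.
  have hcq : `|cq| <= M by rewrite /M; have := normr_ge0 cp; have := normr_ge0 cr; lra.
  have hcr : `|cr| <= M by rewrite /M; have := normr_ge0 cq; have := normr_ge0 cp; lra.
  apply: (@perturb_eps beta lam v p e C hb).
  - by apply: vz; rewrite eq_sym.
  - by rewrite vp /cp subr_eq0 alpha_inj.
  - by rewrite (@sum3 v p q r) // vp vq vr /cp /cq /cr; ring.
  - exact: e0.
  - move=> i ib.
    have [->|ip] := eqVneq i p; first by rewrite vp key // /mu !ge_min lexx.
    have [->|iq] := eqVneq i q; first by rewrite vq key // /mu !ge_min lexx orbT.
    have [->|ir] := eqVneq i r; first by rewrite vr key // /mu !ge_min lexx orbT.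
    by rewrite vz // normr0 mulr0 Nn.
  - have -> : Amul alpha v = 0.
      rewrite /Amul (@sum3 (fun l => alpha l * v l) p q r) //=.
        by rewrite vp vq vr /cp /cq /cr; ring.
      by move=> l h1 h2 h3; rewrite vz ?mulr0.
    by rewrite normr0 mulr0.
have z : forall l, l != beta -> l != p -> l != q -> lam l = 0.
  by move=> l lb lp lq; apply: nz => //; have := nr l; rewrite /= lb lp lq /= => ->.
have s3 : lam beta + lam p + lam q = 0 by rewrite -hs (@sum3 lam beta p q).
have Ae : Amul alpha lam = alpha beta * lam beta + alpha p * lam p + alpha q * lam q.
  rewrite /Amul (@sum3 (fun l => alpha l * lam l) beta p q) //=.
  by move=> l h1 h2 h3; rewrite z ?mulr0.
move: A0; rewrite le_eqVlt => /orP [/eqP A0 | Apos].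
  right; rewrite hb in s3 Ae.
  have s1 : lam p + lam q = 1 by lra.
  have s2 : alpha p * lam p + alpha q * lam q = alpha beta by rewrite -A0 in Ae; lra.
  case: (ltngtP p q) => h.
  - by apply: (@type2_of beta lam p q) => //; rewrite eq_sym.
  - apply: (@type2_of beta lam q p) => //; try by rewrite eq_sym.
    + by rewrite addrC.
    + by rewrite addrC.
    + by move=> l h1 h2 h3; apply: z.
  - by move/eqP: pq; case; apply: val_inj.
exfalso.
pose v := fun l : 'I_m => (l == p)%:R - (l == q)%:R : R.
have vp : v p = 1 by rewrite /v eqxx (negbTE pq) /= subr0.
have vq : v q = -1 by rewrite /v eqxx (negbTE qp) /= sub0r.
have vz : forall l, l != p -> l != q -> v l = 0.
  by move=> l h1 h2; rewrite /v (negbTE h1) (negbTE h2) /= subr0.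
have Av : Amul alpha v = alpha p - alpha q.
  rewrite /Amul (@sum2 (fun l => alpha l * v l) p q) //=.
    by rewrite vp vq; ring.
  by move=> l h1 h2; rewrite vz ?mulr0.
pose D := `|alpha p - alpha q| + 1.
have D0 : 0 < D by rewrite /D; have := normr_ge0 (alpha p - alpha q); lra.
pose e := Num.min (Num.min (lam p) (lam q)) (Amul alpha lam / D).
have e0 : 0 < e by rewrite /e !lt_min pp qq divr_gt0.
apply: (@perturb_eps beta lam v p e C hb).
- by apply: vz; rewrite eq_sym.
- by rewrite vp oner_eq0.
- by rewrite (@sum2 v p q) // vp vq subrr.
- exact: e0.
- move=> i ib.
  have [->|ip] := eqVneq i p; first by rewrite vp normr1 mulr1 /e !ge_min lexx.
  have [->|iq] := eqVneq i q; first by rewrite vq normrN normr1 mulr1 /e !ge_min lexx orbT.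
  by rewrite vz // normr0 mulr0 Nn.
- have he : e <= Amul alpha lam / D by rewrite /e ge_min lexx orbT.
  rewrite ler_pdivlMr // /D mulrDr mulr1 in he.
  rewrite Av; lra.
Qed.

End Sums.

Theorem mainTheorem19 (R : realType) (m : nat) (alpha : 'I_m -> R)
    (halpha : forall i j : 'I_m, (i < j)%N -> alpha i < alpha j)
    (lam : 'I_m -> R) :
  ((exists beta, is_X_circuit [set x : R | 0 <= x] alpha beta lam)
     /\ normalized lam)
  <->
  ((exists j k : 'I_m, (j < k)%N /\
      forall l, lam l = (l == k)%:R - (l == j)%:R)
   \/
   (exists i j k : 'I_m, (i < j)%N /\ (j < k)%N /\
      forall l, lam l =
        (alpha j - alpha i) / (alpha k - alpha i) * (l == k)%:R
        + (alpha k - alpha j) / (alpha k - alpha i) * (l == i)%:R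
        - (l == j)%:R)).
Proof.
split.
  by move=> [[beta C] hn]; exact: (@forward R m alpha halpha beta lam C hn).
case=> [[j [k [jk hl]]] | [i [j [k [ij [jk hl]]]]]].
  have jk' : j != k by rewrite neq_ltn jk.
  split; first by exists j; exact: (@circ1 R m alpha halpha j k lam jk hl).
  exists j; split; first by rewrite hl eqxx (negbTE jk') sub0r.
  by move=> l /negbTE lj; rewrite hl lj subr0 ler0n.
have ji : j != i by rewrite neq_ltn ij orbT.
have jk' : j != k by rewrite neq_ltn jk.
have aij := halpha _ _ ij; have ajk := halpha _ _ jk.
split; first by exists j; exact: (@circ2 R m alpha halpha i j k lam ij jk hl).
exists j; split; first by rewrite hl eqxx (negbTE jk') (negbTE ji) /= !mulr0 add0r sub0r.
move=> l /negbTE lj; rewrite hl lj subr0.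
apply: addr_ge0; apply: mulr_ge0; rewrite ?ler0n //; apply: divr_ge0;
  rewrite subr_ge0 ltW //; exact: lt_trans aij ajk.
Qed.
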